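(* Let $H\in\mathbb{R}^{n\times n}$ be a $\mu$-incoherent symmetric positive semi-definite matrix, and let $H=(\grave U+I)D(\grave U+I)^T$ be its LDL decomposition, with $\grave U$ strictly upper triangular and $D$ diagonal with nonnegative entries. Then $$\operatorname{tr}(D)\le\frac{\mu^2}{n}\operatorname{tr}(H^{1/2})^2.$$
   Context: A symmetric matrix $H\in\mathbb{R}^{n\times n}$ is $\mu$-incoherent if it has an eigendecomposition $H=Q\Lambda Q^T$ ($Q$ orthogonal, $\Lambda$ diagonal) such that $|Q_{ij}|\le\mu/\sqrt{n}$ for all $i,j$. $H^{1/2}$ denotes the positive semi-definite square root. *)

(* Defs.v *)
From HB Require Import structures.
From mathcomp Require Import all_boot all_order all_algebra.
Set Implicit Arguments. Unset Strict Implicit. Unset Printing Implicit Defensive.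
Import Order.TTheory GRing.Theory Num.Theory.
Local Open Scope ring_scope.

Definition symmetricmx (R : ringType) (n : nat) (H : 'M[R]_n) : Prop := H^T = H.

Definition psdmx (R : numDomainType) (n : nat) (H : 'M[R]_n) : Prop :=
  symmetricmx H /\ forall x : 'cV[R]_n, 0 <= (x^T *m H *m x) ord0 ord0.

Definition orthogonalmx (R : ringType) (n : nat) (Q : 'M[R]_n) : Prop :=
  Q *m Q^T = 1%:M /\ Q^T *m Q = 1%:M.

Definition incoherent (R : rcfType) (n : nat) (mu : R) (H : 'M[R]_n) : Prop :=
  exists (Q L : 'M[R]_n), orthogonalmx Q /\ is_diag_mx L /\
    H = Q *m L *m Q^T /\
    forall i j, `|Q i j| <= mu / Num.sqrt (n%:R).

Definition strictly_upper (R : ringType) (n : nat) (U : 'M[R]_n) : Prop :=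
  forall i j : 'I_n, (j <= i)%N -> U i j = 0.

(* Main.v *)
Require Import Defs.
From HB Require Import structures.
From mathcomp Require Import all_boot all_order all_algebra.
From mathcomp Require Import ring lra.
Set Implicit Arguments. Unset Strict Implicit. Unset Printing Implicit Defensive.
Import Order.TTheory GRing.Theory Num.Theory.
Local Open Scope ring_scope.

Section H.
Variable R : rcfType.

Definition form n (A : 'M[R]_n) (x y : 'cV[R]_n) : R := (x^T *m A *m y) ord0 ord0.
Definition ev n (i : 'I_n) : 'cV[R]_n := delta_mx i ord0.

Lemma formE n (A : 'M[R]_n) i j : form A (ev i) (ev j) = A i j.
Proof.
by rewrite /form /ev trmx_delta -rowE -colE !mxE.
Qed.

Lemma form_sym n (A : 'M[R]_n) x y : A^T = A -> form A x y = form A y x.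
Proof.
move=> HA; rewrite /form.
have E : forall M : 'M[R]_1, M ord0 ord0 = M^T ord0 ord0 by move=> M; rewrite mxE.
rewrite E.
by rewrite !trmx_mul trmxK HA mulmxA.
Qed.

Lemma formDl n (A : 'M[R]_n) x y z : form A (x + y) z = form A x z + form A y z.
Proof. by rewrite /form linearD /= !mulmxDl mxE. Qed.
Lemma formDr n (A : 'M[R]_n) x y z : form A z (x + y) = form A z x + form A z y.
Proof. by rewrite /form !mulmxDr mxE. Qed.
Lemma formZl n (A : 'M[R]_n) a x z : form A (a *: x) z = a * form A x z.
Proof. by rewrite /form linearZ /= -!scalemxAl mxE. Qed.
Lemma formZr n (A : 'M[R]_n) a x z : form A z (a *: x) = a * form A z x.
Proof. by rewrite /form -!scalemxAr mxE. Qed.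

Lemma quad_disc (a b c : R) : 0 <= a -> 0 <= c ->
  (forall t, 0 <= a + 2 * t * b + t ^+ 2 * c) -> b ^+ 2 <= a * c.
Proof.
move=> ha hc ht.
have [c0|cpos] := eqVneq c 0.
  subst c; have [b0|bn0] := eqVneq b 0.
    by subst b; rewrite expr0n /= mulr0.
  have := ht (- (a + 1) / (2 * b)).
  have -> : 2 * (- (a + 1) / (2 * b)) * b = -(a+1) by field; rewrite ?bn0 ?pnatr_eq0 ?mulf_neq0 ?pnatr_eq0.
  rewrite mulr0 addr0; lra.
have hc' : 0 < c by rewrite lt_def cpos hc.
have := ht (- b / c).
have -> : a + 2 * (- b / c) * b + (- b / c) ^+ 2 * c = a - b^+2 / c.
  by field.
rewrite subr_ge0 ler_pdivrMr //.
Qed.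


Lemma formEl n (A : 'M[R]_n) i x : form A (ev i) x = (A *m x) i ord0.
Proof. by rewrite /form /ev trmx_delta -mulmxA -rowE mxE. Qed.

Lemma psd_form n (A : 'M[R]_n) x : psdmx A -> 0 <= form A x x.
Proof. by case=> _ /(_ x). Qed.

Lemma psd_CS n (A : 'M[R]_n) x y : psdmx A ->
  form A x y ^+ 2 <= form A x x * form A y y.
Proof.
move=> hA; have [hs _] := hA.
apply: quad_disc; [exact: psd_form | exact: psd_form |] => t.
have := psd_form (x + t *: y) hA.
rewrite formDl !formDr !formZl !formZr (form_sym y x hs).
move=> h; apply: (le_trans h); rewrite le_eqVlt; apply/orP; left; apply/eqP; ring.
Qed.

Lemma psd_ker n (A : 'M[R]_n) x : psdmx A -> form A x x = 0 -> A *m x = 0.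
Proof.
move=> hA h0; apply/matrixP => i j; rewrite ord1 [in RHS]mxE -formEl.
have := psd_CS (ev i) x hA; rewrite h0 mulr0 => h.
by apply/eqP; rewrite -sqrf_eq0 eq_le h sqr_ge0.
Qed.

Lemma psd1 n : psdmx (1%:M : 'M[R]_n).
Proof.
split; first by rewrite /Defs.symmetricmx; apply: trmx1.
move=> x; rewrite mulmx1 mxE; apply: sumr_ge0 => k _.
by rewrite mxE -expr2 sqr_ge0.
Qed.

Lemma formM n (A M : 'M[R]_n) y : form A (M *m y) (M *m y) = form (M^T *m A *m M) y y.
Proof. by rewrite /form trmx_mul !mulmxA. Qed.

Lemma formDm n (A B : 'M[R]_n) x : form (A + B) x x = form A x x + form B x x.
Proof. by rewrite /form mulmxDr mulmxDl mxE. Qed.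

Lemma sym_sub n (A B : 'M[R]_n) : A^T = A -> B^T = B -> (A - B)^T = A - B.
Proof. by move=> hA hB; rewrite linearD /= linearN /= hA hB. Qed.

Lemma sqrt_unique n (T Rm : 'M[R]_n) : psdmx T -> psdmx Rm ->
  T *m T = Rm *m Rm -> T *m Rm = Rm *m T -> T = Rm.
Proof.
move=> hT hR hTT hTR.
have [sT _] := hT; have [sR _] := hR.
set M := T - Rm.
have sM : M^T = M by apply: sym_sub.
have MP : M *m (T + Rm) = 0.
  rewrite /M mulmxBl !mulmxDr hTT hTR.
  by rewrite [X in _ - X]addrC subrr.
have My : forall y : 'cV[R]_n, M *m y = 0.
  move=> y.
  have hs : form T (M *m y) (M *m y) + form Rm (M *m y) (M *m y) = 0.
    by rewrite -formDm formM sM MP mul0mx /form mulmx0 mul0mx mxE.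
  have h1 := psd_form (M *m y) hT; have h2 := psd_form (M *m y) hR.
  move: hs h1 h2; set a := form T _ _; set b := form Rm _ _ => hs h1 h2.
  have e1 : a = 0.
    have ha : a = - b by apply/eqP; rewrite -addr_eq0 hs.
    by apply/eqP; rewrite eq_le h1 andbT ha oppr_le0.
  have e2 : b = 0 by move: hs; rewrite e1 add0r.
  have k1 := psd_ker hT e1; have k2 := psd_ker hR e2.
  have MM : M *m (M *m y) = 0 by rewrite /M mulmxBl k1 k2 subrr.
  have e3 : form 1%:M (M *m y) (M *m y) = 0.
    by rewrite formM mulmx1 sM /form -mulmxA -(mulmxA M) MM mulmx0 mxE.
  by have := psd_ker (psd1 n) e3; rewrite mul1mx.
apply/eqP; rewrite -subr_eq0; apply/eqP; apply/matrixP => i j.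
have := My (ev j); rewrite /ev -colE => /matrixP /(_ i ord0).
by rewrite !mxE.
Qed.

Lemma formMl n (A B : 'M[R]_n) v z : form A (B *m v) z = form (B^T *m A) v z.
Proof. by rewrite /form trmx_mul !mulmxA. Qed.
Lemma formMr n (A B : 'M[R]_n) v z : form A z (B *m v) = form (A *m B) z v.
Proof. by rewrite /form !mulmxA. Qed.

Lemma tr_psd n (S M : 'M[R]_n) : psdmx S -> 0 <= \tr (M^T *m S *m M).
Proof.
move=> hS; rewrite /mxtrace; apply: sumr_ge0 => i _.
by rewrite -formE -formM; apply: psd_form.
Qed.

Lemma scal (d a c s : R) : 0 <= d -> 0 <= a -> s <= c -> d ^+ 2 <= a * s ->
  d <= c * d^-1 * a.
Proof.
move=> hd ha hsc h.
have h' : d ^+ 2 <= c * a by nra.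
have [->|dn0] := eqVneq d 0; first by rewrite invr0 mulr0 mul0r.
have dp : 0 < d by rewrite lt_def dn0 hd.
by rewrite mulrAC ler_pdivlMr // -expr2.
Qed.

Lemma comm_sqrt n (T : 'M[R]_n) (l : 'rV[R]_n) :
  T *m diag_mx l = diag_mx l *m T ->
  T *m diag_mx (\row_i Num.sqrt (l 0 i)) = diag_mx (\row_i Num.sqrt (l 0 i)) *m T.
Proof.
move=> TL.
rewrite mul_mx_diag mul_diag_mx; apply/matrixP => i j; rewrite !mxE.
move/matrixP: TL => /(_ i j); rewrite mul_mx_diag mul_diag_mx !mxE.
have [->|tn0] := eqVneq (T i j) 0; first by move=> _; rewrite mul0r mulr0.
move=> h; have e := mulfI tn0 (etrans h (mulrC _ _)); by rewrite e mulrC.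
Qed.
End H.
Arguments form {R n}.
Arguments ev {R n}.

Unset Implicit Arguments.
Set Strict Implicit.

Theorem lemma2 (R : rcfType) (n : nat) (mu : R) (H U D S : 'M[R]_n) :
  psdmx H -> incoherent mu H ->
  strictly_upper U -> is_diag_mx D -> (forall i, 0 <= D i i) ->
  H = (U + 1%:M) *m D *m (U + 1%:M)^T ->
  psdmx S -> S *m S = H ->
  \tr D <= mu ^+ 2 / n%:R * (\tr S) ^+ 2.
Proof.
move=> hH [Q [Lam [[QQt QtQ] [dLam [HQ Qb]]]]] hU dD D0 hLDL hS hSS.
have [sS _] := hS; rewrite /Defs.symmetricmx in sS.
set c := mu ^+ 2 / n%:R * \tr S.
have trS0 : 0 <= \tr S by have := tr_psd 1%:M hS; rewrite trmx1 mulmx1 mul1mx.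
have Skk : forall k, S k k <= c.
  set T := Q^T *m S *m Q.
  have hT : psdmx T.
    split; first by rewrite /Defs.symmetricmx /T !trmx_mul trmxK sS mulmxA.
    by move=> x; rewrite -/(form T x x) /T -formM; apply: psd_form.
  have TT : T *m T = Lam.
    rewrite /T -!mulmxA (mulmxA Q) QQt mul1mx (mulmxA S) hSS HQ !mulmxA QtQ mul1mx.
    by rewrite -mulmxA QtQ mulmx1.
  have [l Ll] := diag_mxP _ dLam.
  have l0 : forall i, 0 <= l 0 i.
    move=> i; have := psd_form (T *m ev i) (@psd1 R n).
    by rewrite formM mulmx1 (proj1 hT) TT formE Ll mxE eqxx mulr1n.
  set Rm := diag_mx (\row_i Num.sqrt (l 0 i)).
  have hR : psdmx Rm.
    split; first by rewrite /Defs.symmetricmx tr_diag_mx.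
    move=> x; rewrite mul_mx_diag mxE; apply: sumr_ge0 => j _.
    by rewrite !mxE mulrAC -expr2 mulr_ge0 ?sqr_ge0 ?sqrtr_ge0.
  have RR : Rm *m Rm = Lam.
    rewrite mulmx_diag Ll; congr diag_mx; apply/rowP => j.
    by rewrite !mxE -expr2 sqr_sqrtr.
  have TR : T *m Rm = Rm *m T.
    by apply: comm_sqrt; rewrite -Ll -TT mulmxA.
  have TeqR := sqrt_unique hT hR (etrans TT (esym RR)) TR.
  have SQ : S = Q *m Rm *m Q^T.
    by rewrite -TeqR /T !mulmxA QQt mul1mx -mulmxA QQt mulmx1.
  have trT : \tr Rm = \tr S by rewrite -TeqR /T mxtrace_mulC mulmxA QQt mul1mx.
  move=> k; rewrite /c -trT SQ mul_mx_diag mxE /mxtrace mulr_sumr.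
  apply: ler_sum => j _; rewrite !mxE.
  have := Qb k j; rewrite ler_norml => /andP [q1 q2].
  have m2 : Q k j ^+ 2 <= mu ^+ 2 / n%:R.
    rewrite -[n%:R](@sqr_sqrtr R) ?ler0n // -expr_div_n; nra.
  have s0 := sqrtr_ge0 (l 0 j).
  rewrite mulrAC -expr2 mulrC; rewrite eqxx mulr1n mulrC; exact: ler_wpM2r.
set Lt := U + 1%:M.
have Ltrig : is_trig_mx Lt^T.
  apply/is_trig_mxP => i j ij; rewrite !mxE hU ?(ltnW ij) // add0r.
  suff -> : (j == i) = false by rewrite mulr0n.
  by apply/negbTE; rewrite -val_eqE /= gtn_eqF.
have detL : \det Lt = 1.
  rewrite -det_tr det_trig //; apply: big1 => i _.
  by rewrite !mxE hU // add0r eqxx mulr1n.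
have Lunit : Lt \in unitmx by rewrite unitmxE detL unitr1.
set W := invmx Lt.
have WL : W *m Lt = 1%:M by apply: mulVmx.
have LtW : Lt^T *m W^T = 1%:M by rewrite -trmx_mul WL trmx1.
have hWD : W *m H *m W^T = D by rewrite hLDL !mulmxA WL mul1mx -mulmxA LtW mulmx1.
have hWH : W *m H = D *m Lt^T by rewrite hLDL !mulmxA WL mul1mx.
have [d Dd] := diag_mxP _ dD.
have Dkk : forall k, D k k = d 0 k by move=> k; rewrite Dd mxE eqxx mulr1n.
have WHkk : forall k, (W *m H) k k = d 0 k.
  move=> k; rewrite hWH Dd mul_diag_mx !mxE hU // add0r eqxx !mulr1n mulr1.
  by [].
set G := W *m (S *m S *m S) *m W^T.
have CS : forall k, (D k k) ^+ 2 <= G k k * S k k.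
  move=> k.
  have := psd_CS (S *m (W^T *m ev k)) (ev k) hS.
  have -> : form S (S *m (W^T *m ev k)) (ev k) = D k k.
    by rewrite formMl sS hSS formMl trmxK formE WHkk Dkk.
  have -> : form S (S *m (W^T *m ev k)) (S *m (W^T *m ev k)) = G k k.
    rewrite mulmxA formM formE /G trmx_mul trmxK sS.
    by rewrite !mulmxA.
  by rewrite formE.
set Dp := diag_mx (\row_k (d 0 k)^-1).
set P := S *m W^T *m Dp *m W *m S.
have trDpG : \tr (Dp *m G) = \tr (S *m P).
  have -> : Dp *m G = (Dp *m W *m S) *m (S *m S *m W^T) by rewrite /G !mulmxA.
  rewrite mxtrace_mulC.
  by congr mxtrace; rewrite /P !mulmxA.
have sP : P^T = P by rewrite /P !trmx_mul !trmxK sS tr_diag_mx !mulmxA.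
have PP : P *m P = P.
  have -> : P *m P = S *m W^T *m (Dp *m (W *m H *m W^T) *m Dp) *m W *m S.
    by rewrite /P -hSS !mulmxA.
  rewrite hWD Dd /Dp !mulmx_diag /P /Dp.
  congr (_ *m _ *m _ *m _ *m _); congr diag_mx; apply/rowP => k; rewrite !mxE.
  have [->|dn0] := eqVneq (d 0 k) 0; first by rewrite invr0 !mul0r.
  by rewrite mulVf // mul1r.
have trSP : \tr (S *m P) <= \tr S.
  have E1 : (1%:M - P) *m (1%:M - P) = 1%:M - P.
    by rewrite mulmxBl mul1mx mulmxBr mulmx1 PP subrr subr0.
  have E2 : (1%:M - P)^T = 1%:M - P by rewrite linearB /= trmx1 sP.
  have := tr_psd (1%:M - P) hS.
  rewrite E2 -mulmxA mxtrace_mulC -mulmxA E1 mulmxBr mulmx1.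
  by rewrite raddfB /= subr_ge0.
have c0 : 0 <= c by rewrite /c mulr_ge0 // divr_ge0 ?sqr_ge0 ?ler0n.
have step : \tr D <= c * \tr (Dp *m G).
  rewrite /mxtrace mulr_sumr; apply: ler_sum => k _.
  rewrite mul_diag_mx mxE [X in _ <= _ * (X * _)]mxE mulrA Dkk.
  have G0 : 0 <= G k k.
    have -> : G = (S *m W^T)^T *m S *m (S *m W^T) by rewrite /G trmx_mul trmxK sS !mulmxA.
    by rewrite -formE -formM; apply: psd_form.
  apply: (@scal _ _ _ _ (S k k)); [by rewrite -Dkk | exact: G0 | exact: Skk | ].
  by rewrite -Dkk CS.
apply: (le_trans step).
rewrite trDpG expr2 mulrA -/c.
by apply: ler_wpM2l.
Qed.
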